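(* Let $\lambda\in\Lambda$. If $W(\lambda)\neq\emptyset$, then $W(\lambda)=\widehat W$. Indeed, if $w_N\in W(\lambda)$ then $\underline L^*=\|w_N-w_0\|^2$ and $\widehat W=\{w\in W:H(w-w_N)=0\}=W(\lambda)$, where $H=2(I-\lambda\Delta)$. In particular, if $\lambda\in\Lambda^\circ$ and $w_N\in W(\lambda)$, then $w_N$ is the unique solution of the problem.
   Context: Regular dimension-reduced canonical form: let $q\ge1$, $\gamma_1>\dots>\gamma_q$ nonzero reals with $\gamma_1>0$, $\Gamma^*=\operatorname{diag}(\gamma_1,\dots,\gamma_q)$, $\delta=(\delta_1,\dots,\delta_q)^\top$ with all $\delta_i\ge0$, $k^*\in\mathbb{R}$, $\varepsilon\ge0$. Either ($m_0=0$) $\varepsilon=0$, the variable is $w=z\in\mathbb{R}^q$, $w_0=\delta$, $\Delta=\Gamma^*$, $d=0_q$; or ($m_0>0$) $\varepsilon>0$, $w=(y,z^\top)^\top\in\mathbb{R}^{q+1}$, $w_0=(0,\delta^\top)^\top$, $\Delta=\operatorname{diag}(0,\Gamma^* )$, $d=\varepsilon e_1$. The problem is to minimise $L^*(w)=\|w-w_0\|^2$ over $W=\{w:Q^*(w)=0\}$, $Q^*(w)=w^\top\Delta w+2d^\top w-k^*$, where $W\neq\emptyset$; $\underline L^*=\inf_WL^*$, $\widehat W=\{w\in W:L^*(w)=\underline L^*\}$. Normal equations: $(I-\lambda\Delta)w=w_0+\lambda d$. Admissible region: $\Lambda=(-\infty,\gamma_1^{-1}]$ if $\gamma_q>0$,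 $\Lambda=[\gamma_q^{-1},\gamma_1^{-1}]$ if $\gamma_q<0$; $\Lambda^\circ$ its interior. For $\lambda\in\Lambda$, $W_N(\lambda)$ is the set of solutions $w$ of the normal equations and $W(\lambda)=W\cap W_N(\lambda)$. *)

(* Defs.v *)
(* R is an arbitrary real field (the statement is purely
   algebraic/order-theoretic; no limits are needed). *)
From HB Require Import structures.
From mathcomp Require Import all_boot all_order all_algebra.
Set Implicit Arguments. Unset Strict Implicit. Unset Printing Implicit Defensive.
Import Order.TTheory GRing.Theory Num.Theory.
Local Open Scope ring_scope.

(* Indexing convention: gamma, delta : nat -> R are used at indices 1..q
   (gamma 1 = gamma_1, ..., gamma q = gamma_q), as in the paper.
   The case flag b : bool encodes m0 > 0 (b = true) vs m0 = 0 (b = false);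
   the variable w lives in R^(b + q): for b = false it is z in R^q, for
   b = true it is (y, z^T)^T in R^(q+1). *)

Section Canonical.
Variables (R : realFieldType) (q : nat) (b : bool)
  (gamma delta : nat -> R) (kstar eps : R).

Definition dim := (b + q)%N.

Definition GammaStar : 'M[R]_q := diag_mx (\row_(i < q) gamma i.+1).

(* Delta = Gamma^* (m0 = 0) or diag(0, Gamma^* ) (m0 > 0) *)
Definition Delta : 'M[R]_(b + q) := block_mx 0 0 0 GammaStar.

(* w0 = delta (m0 = 0) or (0, delta^T)^T (m0 > 0) *)
Definition w0 : 'cV[R]_(b + q) := col_mx 0 (\col_(i < q) delta i.+1).

(* d = 0_q (m0 = 0) or eps e_1 (m0 > 0) *)
Definition dvec : 'cV[R]_(b + q) := col_mx (const_mx eps) 0.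

Definition sqnorm n (v : 'cV[R]_n) : R := (v^T *m v) 0 0.

Definition Lstar (w : 'cV[R]_(b + q)) : R := sqnorm (w - w0).

Definition Qstar (w : 'cV[R]_(b + q)) : R :=
  (w^T *m Delta *m w) 0 0 + 2 * (dvec^T *m w) 0 0 - kstar.

Definition inW (w : 'cV[R]_(b + q)) : Prop := Qstar w = 0.

Definition is_inf_value (m : R) : Prop :=
  (forall w, inW w -> m <= Lstar w) /\
  (forall m', (forall w, inW w -> m' <= Lstar w) -> m' <= m).

Definition inWhat (w : 'cV[R]_(b + q)) : Prop :=
  inW w /\ forall v, inW v -> Lstar w <= Lstar v.

Definition inWN (lam : R) (w : 'cV[R]_(b + q)) : Prop :=
  (1%:M - lam *: Delta) *m w = w0 + lam *: dvec.

Definition inWlam (lam : R) (w : 'cV[R]_(b + q)) : Prop :=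
  inW w /\ inWN lam w.

Definition Hmat (lam : R) : 'M[R]_(b + q) := 2 *: (1%:M - lam *: Delta).

Definition inLambda (lam : R) : Prop :=
  if 0 < gamma q then lam <= (gamma 1)^-1
  else ((gamma q)^-1 <= lam) && (lam <= (gamma 1)^-1).

Definition inLambda_int (lam : R) : Prop :=
  if 0 < gamma q then lam < (gamma 1)^-1
  else ((gamma q)^-1 < lam) && (lam < (gamma 1)^-1).

End Canonical.

Arguments Delta {R} q b gamma.
Arguments w0 {R} q b delta.
Arguments dvec {R} q b eps.
Arguments Lstar {R} q b delta w.
Arguments Qstar {R} q b gamma kstar eps w.
Arguments inW {R} q b gamma kstar eps w.
Arguments is_inf_value {R} q b gamma delta kstar eps m.
Arguments inWhat {R} q b gamma delta kstar eps w.
Arguments inWN {R} q b gamma delta eps lam w.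
Arguments inWlam {R} q b gamma delta kstar eps lam w.

(* Main.v *)
Require Import Defs.
From HB Require Import structures.
From mathcomp Require Import all_boot all_order all_algebra.
From mathcomp Require Import ring lra.
Import Order.TTheory GRing.Theory Num.Theory.
Local Open Scope ring_scope.

Definition gv (R : realFieldType) (q : nat) (b : bool) (gamma : nat -> R)
  : 'rV[R]_(b + q) := row_mx (0 : 'rV[R]_b) (\row_(i < q) gamma i.+1).
Arguments gv {R} q b gamma.

Lemma eD (R : realFieldType) n (A B : 'cV[R]_n) i : (A + B) i 0 = A i 0 + B i 0.
Proof. by rewrite mxE. Qed.
Lemma eN (R : realFieldType) n (A : 'cV[R]_n) i : (- A) i 0 = - A i 0.
Proof. by rewrite mxE. Qed.
Lemma eZ (R : realFieldType) n (a : R) (A : 'cV[R]_n) i : (a *: A) i 0 = a * A i 0.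
Proof. by rewrite mxE. Qed.

Lemma e0 (R : realFieldType) n i : (0 : 'cV[R]_n) i 0 = 0.
Proof. by rewrite mxE. Qed.

Lemma sqnormE (R : realFieldType) n (v : 'cV[R]_n) :
  sqnorm v = \sum_i v i 0 ^+ 2.
Proof. rewrite /sqnorm !mxE; apply: eq_bigr => i _; by rewrite !mxE expr2. Qed.

Lemma DeltaE (R : realFieldType) (q : nat) (b : bool) (gamma : nat -> R) :
  Delta q b gamma = diag_mx (gv q b gamma).
Proof.
rewrite /Delta /GammaStar /gv diag_mx_row; congr block_mx.
by apply/matrixP=> i j; rewrite !mxE mul0rn.
Qed.

Lemma AmulE (R : realFieldType) (q : nat) (b : bool) (gamma : nat -> R) (lam : R) (v : 'cV[R]_(b+q)) (i : 'I_(b+q)) :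
  ((1%:M - lam *: Delta q b gamma) *m v) i 0 = (1 - lam * gv q b gamma 0 i) * v i 0.
Proof.
rewrite mulmxBl mul1mx -scalemxAl DeltaE mul_diag_mx !mxE; ring.
Qed.

Lemma QE (R : realFieldType) (q : nat) (b : bool) (gamma : nat -> R) (kstar eps : R) (w : 'cV[R]_(b+q)) :
  Qstar q b gamma kstar eps w =
  \sum_i (gv q b gamma 0 i * w i 0 ^+ 2 + 2 * dvec q b eps i 0 * w i 0) - kstar.
Proof.
rewrite /Qstar DeltaE mul_mx_diag !mxE big_split /= mulr_sumr; congr (_ + _ - _).
  apply: eq_bigr => i _; rewrite !mxE; ring.
apply: eq_bigr => i _; rewrite !mxE; ring.
Qed.

Lemma gv_le (R : realFieldType) (q : nat) (b : bool) (gamma : nat -> R) (lam : R)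
  (hgdec : forall i j : nat, (1 <= i)%N -> (i < j)%N -> (j <= q)%N -> gamma j < gamma i)
  (hgnz : forall i : nat, (1 <= i)%N -> (i <= q)%N -> gamma i != 0)
  (hg1 : 0 < gamma 1) (i : 'I_(b+q)) :
  (inLambda q gamma lam -> 0 <= 1 - lam * gv q b gamma 0 i) /\
  (inLambda_int q gamma lam -> 0 < 1 - lam * gv q b gamma 0 i).
Proof.
rewrite /gv -(splitK i); case: (split i) => j /=.
  by rewrite row_mxEl !mxE mulr0 subr0; split => _; [exact: ler01|exact: ltr01].
rewrite row_mxEr !mxE.
have jq : (j.+1 <= q)%N := ltn_ord j.
have hq1 : (1 <= q)%N by apply: leq_trans jq.
have g1k : gamma j.+1 <= gamma 1.
  have [->|hj] := eqVneq (j : nat) 0%N; first exact: lexx.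
  by apply/ltW/hgdec => //; rewrite ltnS lt0n.
have gkq : gamma q <= gamma j.+1.
  case: (ltngtP j.+1 q) jq => // [h|->] _; last by rewrite lexx.
  by apply/ltW/hgdec.
have i1 : (gamma 1)^-1 * gamma 1 = 1 by rewrite mulVf // lt0r_neq0.
have iq : (gamma q)^-1 * gamma q = 1 by rewrite mulVf // hgnz.
rewrite /inLambda /inLambda_int; case: ifP => hq0; split.
- move=> H; have hq0' : 0 < gamma q by [].
  have a : lam * gamma 1 <= 1 by nra.
  case: (lerP 0 lam) => hl; nra.
- move=> H; have hq0' : 0 < gamma q by [].
  have a : lam * gamma 1 < 1 by nra.
  case: (lerP 0 lam) => hl; nra.
- move=> /andP[H1 H2]; have hq0' : gamma q < 0.
    by rewrite lt_neqAle hgnz //= leNgt hq0.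
  have a : lam * gamma 1 <= 1 by nra.
  have c : lam * gamma q <= 1 by nra.
  case: (lerP 0 lam) => hl; nra.
- move=> /andP[H1 H2]; have hq0' : gamma q < 0.
    by rewrite lt_neqAle hgnz //= leNgt hq0.
  have a : lam * gamma 1 < 1 by nra.
  have c : lam * gamma q < 1 by nra.
  case: (lerP 0 lam) => hl; nra.
Qed.

Theorem lemma8p1 (R : realFieldType) (q : nat) (b : bool)
  (gamma delta : nat -> R) (kstar eps : R)
  (hq : (1 <= q)%N)
  (hgdec : forall i j : nat, (1 <= i)%N -> (i < j)%N -> (j <= q)%N -> gamma j < gamma i)
  (hgnz : forall i : nat, (1 <= i)%N -> (i <= q)%N -> gamma i != 0)
  (hg1 : 0 < gamma 1)
  (hdelta : forall i : nat, (1 <= i)%N -> (i <= q)%N -> 0 <= delta i)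
  (heps : 0 <= eps)
  (hb : b = (0 < eps))
  (hWne : exists w : 'cV[R]_(b + q), inW q b gamma kstar eps w)
  (lam : R) (hlam : inLambda q gamma lam) :
  forall wN : 'cV[R]_(b + q), inWlam q b gamma delta kstar eps lam wN ->
    is_inf_value q b gamma delta kstar eps (Lstar q b delta wN) /\
    (forall w, inWhat q b gamma delta kstar eps w <->
       (inW q b gamma kstar eps w /\ Hmat q b gamma lam *m (w - wN) = 0)) /\
    (forall w, inWhat q b gamma delta kstar eps w <->
       inWlam q b gamma delta kstar eps lam w) /\
    (inLambda_int q gamma lam ->
       inWhat q b gamma delta kstar eps wN /\
       forall w, inWhat q b gamma delta kstar eps w -> w = wN).
Proof.
move=> wN [hWN hNN].
set c := fun i => 1 - lam * gv q b gamma 0 i.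
have cge0 : forall i, 0 <= c i by move=> i; exact: (@gv_le R q b gamma lam hgdec hgnz hg1 i).1 hlam.
have hN : forall i, c i * wN i 0 = w0 q b delta i 0 + lam * dvec q b eps i 0.
  move=> i; move/matrixP: hNN => /(_ i 0); by rewrite AmulE ?eD ?eN ?eZ ?e0.
have key : forall w, inW q b gamma kstar eps w ->
    Lstar q b delta w = Lstar q b delta wN + \sum_i c i * (w i 0 - wN i 0) ^+ 2.
  move=> w hw.
  have e : Lstar q b delta w = Lstar q b delta wN + \sum_i c i * (w i 0 - wN i 0) ^+ 2
     + lam * ((Qstar q b gamma kstar eps w + kstar) - (Qstar q b gamma kstar eps wN + kstar)).
    rewrite /Lstar !QE !sqnormE !subrK -sumrB mulr_sumr -!big_split /=.
    apply: eq_bigr => i _; rewrite ?eD ?eN ?eZ ?e0.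
    have -> : w0 q b delta i 0 = c i * wN i 0 - lam * dvec q b eps i 0 by rewrite hN; ring.
    rewrite /c; ring.
  by rewrite e hw hWN !add0r subrr mulr0 addr0.
have Sge0 : forall w : 'cV[R]_(b+q), 0 <= \sum_i c i * (w i 0 - wN i 0) ^+ 2.
  by move=> w; apply: sumr_ge0 => i _; apply: mulr_ge0 => //; exact: sqr_ge0.
have minN : inWhat q b gamma delta kstar eps wN.
  split => // v hv; rewrite (key v hv) lerDl; exact: Sge0.
have charH : forall w, inW q b gamma kstar eps w ->
   (Lstar q b delta w <= Lstar q b delta wN <-> forall i, c i * (w i 0 - wN i 0) = 0).
  move=> w hw; rewrite (key w hw); split.
    move=> hle i.
    have s0 : \sum_i c i * (w i 0 - wN i 0) ^+ 2 = 0.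
      by apply/eqP; rewrite eq_le Sge0 andbT -(lerD2l (Lstar q b delta wN)) addr0.
    have := psumr_eq0P (fun i _ => mulr_ge0 (cge0 i) (sqr_ge0 (w i 0 - wN i 0))) s0 (erefl true : true).
    move=> /(_ i) /eqP; rewrite mulf_eq0 => /orP[/eqP->|]; first by rewrite mul0r.
    by rewrite sqrf_eq0 => /eqP->; rewrite mulr0.
  move=> h; rewrite big1 ?addr0 // => i _.
  by rewrite expr2 mulrA h mul0r.
have Hchar : forall w : 'cV[R]_(b+q), Hmat q b gamma lam *m (w - wN) = 0 <->
     forall i, c i * (w i 0 - wN i 0) = 0.
  move=> w; split.
    move=> /matrixP h i; move: (h i 0); rewrite /Hmat -scalemxAl ?eD ?eN ?eZ ?e0 AmulE ?eD ?eN ?eZ ?e0.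
    by move/eqP; rewrite mulf_eq0 pnatr_eq0 /= => /eqP.
  move=> h; apply/matrixP => i j; rewrite ord1 /Hmat -scalemxAl ?eD ?eN ?eZ ?e0 AmulE ?eD ?eN ?eZ ?e0.
  by rewrite [_ * (_ + _)]h mulr0.
have Nchar : forall w : 'cV[R]_(b+q), inWN q b gamma delta eps lam w <->
     forall i, c i * (w i 0 - wN i 0) = 0.
  move=> w; split.
    move=> /matrixP h i; move: (h i 0); rewrite AmulE ?eD ?eN ?eZ ?e0 -hN => e.
    by rewrite mulrBr e subrr.
  move=> h; apply/matrixP => i j; rewrite ord1 AmulE ?eD ?eN ?eZ ?e0 -hN.
  by apply/eqP; rewrite -subr_eq0 -mulrBr h.
have what : forall w, inWhat q b gamma delta kstar eps w <->
     (inW q b gamma kstar eps w /\ forall i, c i * (w i 0 - wN i 0) = 0).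
  move=> w; split.
    move=> [hw hmin]; split => //; apply/(charH w hw); exact: hmin.
  move=> [hw h]; split => // v hv; apply: le_trans (minN.2 v hv).
  by apply/(charH w hw).
split.
  split; first by move=> w hw; rewrite (key w hw) lerDl.
  by move=> m' hm; exact: hm.
split.
  move=> w; rewrite what; split => [[hw h]|[hw h]]; split => //; by apply/Hchar.
split.
  move=> w; rewrite what; split => [[hw h]|[hw h]]; split => //; by apply/Nchar.
move=> hint; split => // w /what [hw h].
apply/matrixP => i j; rewrite ord1.
have cp : 0 < c i by exact: (@gv_le R q b gamma lam hgdec hgnz hg1 i).2 hint.
by apply/eqP; rewrite -subr_eq0; move/eqP: (h i); rewrite mulf_eq0 (gt_eqF cp).
Qed.
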